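(* Let $a_n$ denote the maximum degree of a minimal monomial generator of $J(P_n)$. For every $n\geq5$, $a_n=\max\{a_{n-2}+1,\,a_{n-3}+2\}$. For every $n\geq 2$, $$a_n=\begin{cases}2k & \text{if } n=3k+1 \text{ or } n=3k,\\ 2k+1 & \text{if } n=3k+2.\end{cases}$$
   Context: $P_n$ is the path graph on vertices $x_1,\ldots,x_n$ with edges $\{x_i,x_{i+1}\}$, $1\le i\le n-1$, and $J(P_n)\subset K[x_1,\ldots,x_n]$ ($K$ a field) is its cover ideal, generated by the monomials $\prod_{x\in C}x$ with $C$ a minimal vertex cover of $P_n$. *)

(* Defs.v *)
From mathcomp Require Import all_boot.
Set Implicit Arguments. Unset Strict Implicit. Unset Printing Implicit Defensive.

(* The path graph P_n on vertices x_1..x_n is modelled on 'I_n (vertex i <-> x_{i+1});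
   its edges are {i, i+1} for i + 1 < n. *)
Definition path_edge (n : nat) (i j : 'I_n) : bool := (j : nat) == i.+1.

Definition vertex_cover (n : nat) (C : {set 'I_n}) : bool :=
  [forall i : 'I_n, forall j : 'I_n, path_edge i j ==> (i \in C) || (j \in C)].

Definition minimal_vertex_cover (n : nat) (C : {set 'I_n}) : bool :=
  minset (@vertex_cover n) C.

(* The minimal monomial generators of the cover ideal J(P_n) are the squarefree
   monomials prod_{x in C} x for C a minimal vertex cover; such a monomial has
   degree #|C|.  a n = maximum degree of a minimal monomial generator of J(P_n). *)
Definition a (n : nat) : nat :=
  \max_(C : {set 'I_n} | minimal_vertex_cover C) #|C|.

(* Main.v *)
Require Import Defs.
From mathcomp Require Import all_boot zify.
Set Implicit Arguments. Unset Strict Implicit.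

Definition near n (d v : 'I_n) : bool :=
  [|| (v : nat) == d, (v : nat) == d.+1 | (v : nat).+1 == d].

Lemma min_near n (C : {set 'I_n}) : minimal_vertex_cover C ->
  forall v : 'I_n, exists d, (d \in ~: C) && near d v.
Proof.
move=> /minsetP [cov mn] v.
case vC: (v \in C); last first.
  by exists v; rewrite inE vC /near eqxx.
have: ~~ vertex_cover (C :\ v).
  apply/negP=> cB.
  have := mn _ cB (subsetDl _ _) => /setP /(_ v).
  by rewrite !inE eqxx vC.
case/forallPn=> i /forallPn [j]; rewrite negb_imply !inE negb_or !negb_and !negbK.
case/and3P=> /eqP e /orP[/eqP iv|iC] /orP[/eqP jv|jC].
- by move: e; rewrite iv jv; lia.
- by exists j; rewrite inE jC /near -iv e eqxx !orbT.
- by exists i; rewrite inE iC /near -jv e eqxx !orbT.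
- move: cov => /forallP /(_ i) /forallP /(_ j); rewrite /path_edge e eqxx /=.
  by rewrite (negbTE iC) (negbTE jC).
Qed.

Lemma upper n (C : {set 'I_n}) : minimal_vertex_cover C -> #|C| <= n - (n+2) %/ 3.
Proof.
move=> mC; have hn := min_near mC.
set D := ~: C.
pose pk (v : 'I_n) := odflt v [pick d in D | near d v].
have pkP : forall v, (pk v \in D) && near (pk v) v.
  move=> v; rewrite /pk; case: pickP => [d /= /andP[-> ->] //|/= H].
  by have [d /andP[dD nd]] := hn v; have := H d; rewrite dD nd.
pose f (v : 'I_n) := (pk v, inord (v.+1 - pk v) : 'I_3).
have finj : injective f.
  move=> u v [e1 e2]; apply/val_inj => /=.
  have /andP[_ nu] := pkP u; have /andP[_ nv] := pkP v.
  have := congr1 val e2; rewrite /= !inordK;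
  by move: nu nv; rewrite /near -?e1; lia.
have sub : f @: [set: 'I_n] \subset setX D [set: 'I_3].
  apply/subsetP=> x; case/imsetP=> v _ ->.
  by rewrite in_setX in_setT andbT /=; case/andP: (pkP v).
have := subset_leq_card sub.
rewrite card_in_imset; last by move=> u v _ _; apply: finj.
rewrite cardsX !cardsT !card_ord => h.
have := cardsC C; rewrite card_ord -/D => hc.
move: h hc; move: #|D| #|C| => x y; lia.
Qed.

Definition Cn n : {set 'I_n} := [set i : 'I_n | i %% 3 != (n %% 3 == 0)].

Lemma Cn_min n : minimal_vertex_cover (Cn n).
Proof.
have cov : vertex_cover (Cn n).
  apply/forallP=> i; apply/forallP=> j; apply/implyP=> /eqP e.
  rewrite !inE e; case: (n %% 3 == 0) => /=; apply/orP; lia.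
apply/minsetP; split => // B cB sB.
apply/eqP; rewrite eqEsubset sB /=; apply/subsetP=> v vC.
apply/negPn/negP=> vB.
have [w [wC ed]] : exists w : 'I_n, w \notin Cn n /\ ((w : nat).+1 == v \/ (v : nat).+1 == w).
  move: vC; rewrite inE => vC.
  case: (boolP ((v %% 3 == 0) && (n %% 3 == 0))) => [/andP[h1 h2]|h1].
    have lt : v.+1 < n by move: (ltn_ord v) h1 h2; lia.
    exists (Ordinal lt); rewrite inE /=; split; [apply/negPn; move: h1 h2; lia | by right].
  case: (boolP ((v %% 3 == 2) && (n %% 3 != 0))) => [/andP[h3 h4]|h3].
    have lt : v.+1 < n by move: (ltn_ord v) h3 h4; lia.
    exists (Ordinal lt); rewrite inE /=; split; [apply/negPn; move: h3 h4; lia | by right].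
  have lt : v.-1 < n by move: (ltn_ord v); lia.
  exists (Ordinal lt); rewrite inE /=; split.
    by apply/negPn; move: vC h1 h3; case: (n %% 3 == 0); lia.
  left; move: vC h1 h3; case: (n %% 3 == 0); lia.
have wB : w \notin B by apply: contra wC; apply: (subsetP sB).
case: ed => /eqP ed.
- move: cB => /forallP /(_ w) /forallP /(_ v); rewrite /path_edge -ed eqxx /=.
  by rewrite (negbTE wB) (negbTE vB).
- move: cB => /forallP /(_ v) /forallP /(_ w); rewrite /path_edge -ed eqxx /=.
  by rewrite (negbTE wB) (negbTE vB).
Qed.

Lemma Cn_card n : n - (n+2) %/ 3 <= #|Cn n|.
Proof.
have lt : forall v : 'I_n, v %/ 3 < (n+2) %/ 3 by move=> v; move: (ltn_ord v); lia.
pose f (v : 'I_n) := Ordinal (lt v).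
have : #|[set f x | x in ~: Cn n]| = #|~: Cn n|.
  apply: card_in_imset => u v; rewrite !inE !negbK => /eqP hu /eqP hv [] e.
  apply/val_inj; move: hu hv e; case: (n %% 3 == 0) => /=; lia.
move=> h; have := max_card (mem [set f x | x in ~: Cn n]).
rewrite h card_ord; have := cardsC (Cn n); rewrite card_ord.
move: #|Cn n| #|~: Cn n| => x y; lia.
Qed.

Lemma a_val n : a n = n - (n+2) %/ 3.
Proof.
apply/eqP; rewrite eqn_leq; apply/andP; split.
  by rewrite /a; apply/bigmax_leqP => C; apply: upper.
apply: leq_trans (Cn_card n) _.
rewrite /a; apply: (leq_bigmax_cond (F := fun C : {set 'I_n} => #|C|)); exact: Cn_min.
Qed.

Theorem lemma5p2 :
  (forall n : nat, 5 <= n -> a n = maxn (a (n - 2)).+1 (a (n - 3)).+2) /\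
  (forall n k : nat, 2 <= n ->
     ((n = 3 * k + 1 \/ n = 3 * k) -> a n = 2 * k) /\
     (n = 3 * k + 2 -> a n = 2 * k + 1)).
Proof.
split=> [n hn|n k hn]; rewrite !a_val; first lia.
split; lia.
Qed.
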